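(* In the setting below, for each $1\le k\le n$ and each $1\le t\le mn$, $$\mathbb{E}\left(X_{k,t+1}\mid g_{\le t}, z_{\le t-1}\right)\le X_{k,t}.$$
   Context: Setting: $m,n$ are positive integers with $n\ge 1200\sqrt m$. A deck of $mn$ cards with $m$ copies of each label $1,\dots,n$ is shuffled uniformly at random. A fixed guessing strategy is used: in round $t=1,\dots,mn$ the Guesser guesses $g_t\in\{1,\dots,n\}$, a function (possibly randomized independently of the deck) of $y_1,\dots,y_{t-1}$, where $y_t\in\{0,1\}$ is the indicator that the $t$-th card has label $g_t$. For a vector $v$, $v_{\le t}:=(v_1,\dots,v_t)$. For $1\le k\le n$, $1\le t\le mn+1$: $a(k,t):=|\{1\le i<t: g_i=k\}|$. Let $Y:=\lfloor \tfrac16\sqrt m\, n\rfloor$. Let $(z_1,\dots,z_{mn})\in\{0,1\}^{mn}$ be a random vector (on an extension of the probability space), with $c(k,t):=|\{1\le i<t: g_i=k,\ z_i=1\}|$, satisfying almost surely: (a) for all $k,t$: $m-\max\{mn-a(k,t)-Y,0\}\le c(k,t)\le m$; (b) for each $t$, conditioned on $g_{\le t},y_{\le t}$, the coordinates of $z_{\le t}$ are mutually independent and independent from $g_{\le mn},y_{\le mn}$; (c) for each $t$, if $a(g_t,t)<mn-Y$ then $\mathbb{E}(z_t\mid g_{\le t},z_{\le t-1})=\frac{m-c(g_t,t)}{mn-a(g_t,t)-Y}$; (d) for each $t$, if $\mathbb{E}(y_t\mid g_{\le t},y_{\le t-1})\le\mathbb{E}(z_t\mid g_{\le t},z_{\le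 t-1})$ then $y_t\le z_t$. (Such a vector exists.) Define $f:\mathbb{R}\to\mathbb{R}$ by $f(x)=x^2$ if $x\le 0$, $f(x)=0$ if $0<x<Y/n$, and $f(x)=(x-Y/n)^2$ if $x\ge Y/n$. For $1\le k\le n$, $1\le t\le mn+1$, let $$X_{k,t}:=f\!\left(c(k,t)-\frac{a(k,t)}{n}\right)-3c(k,t)-\frac{3a(k,t)}{n}.$$ *)

(* Defs.v *)
From mathcomp Require Import all_boot all_order all_algebra.
From mathcomp Require Import reals.
Unset Printing Implicit Defensive.
Import Order.TTheory GRing.Theory Num.Theory.
Local Open Scope ring_scope.

Section Defs.
Variable R : realType.
Variable Omega : finType.
Variable P : Omega -> R.

Definition is_prob : Prop := (forall w, 0 <= P w) /\ \sum_(w : Omega) P w = 1.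

Definition Pr (E : pred Omega) : R := \sum_(w : Omega | E w) P w.

(* Elementary conditional expectation of X given the discrete random variable
   [key] (a finite-valued sigma-algebra), evaluated at the sample point w:
   E(X | key)(w) = E(X ; key = key w) / P(key = key w).
   It is only used at points w with P w > 0 (so the denominator is > 0). *)
Definition condexp (K : eqType) (X : Omega -> R) (key : Omega -> K) (w : Omega) : R :=
  (\sum_(w' : Omega | key w' == key w) P w' * X w') /
  (\sum_(w' : Omega | key w' == key w) P w').

End Defs.

(* Rounds are indexed 1..mn; labels 1..n are represented by 'I_n = {0..n-1}. *)

(* the deck: [d i] is the label of the i-th card, 1 <= i <= mn;
   valid = every label occurs exactly m times among positions 1..mn *)
Definition valid_deck (m n : nat) (d : nat -> 'I_n) : bool :=
  [forall k : 'I_n, count (fun i => d i == k) (iota 1 (m * n)) == m].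

Definition agree (m n : nat) (d d' : nat -> 'I_n) : bool :=
  all (fun i => d i == d' i) (iota 1 (m * n)).

Definition yv {n : nat} (deck g : nat -> 'I_n) (t : nat) : bool := deck t == g t.

Definition pre {A : Type} (v : nat -> A) (t : nat) : seq A := [seq v i | i <- iota 1 t].

Definition acnt {n : nat} (g : nat -> 'I_n) (k : 'I_n) (t : nat) : nat :=
  count (fun i => g i == k) (iota 1 t.-1).

Definition ccnt {n : nat} (g : nat -> 'I_n) (z : nat -> bool) (k : 'I_n) (t : nat) : nat :=
  count (fun i => (g i == k) && z i) (iota 1 t.-1).

Definition Ybig (m n : nat) (R : realType) : nat :=
  `| Num.floor (Num.sqrt (m%:R : R) * n%:R / 6) |%N.

Definition fpot (m n : nat) (R : realType) (x : R) : R :=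
  if x <= 0 then x ^+ 2
  else if x < (Ybig m n R)%:R / n%:R then 0
  else (x - (Ybig m n R)%:R / n%:R) ^+ 2.

Definition Xkt (m n : nat) (R : realType) (g : nat -> 'I_n) (z : nat -> bool)
    (k : 'I_n) (t : nat) : R :=
  fpot m n R ((ccnt g z k t)%:R - (acnt g k t)%:R / n%:R)
  - 3 * (ccnt g z k t)%:R - 3 * (acnt g k t)%:R / n%:R.

(* Main.v *)
Require Import Defs.
From mathcomp Require Import all_boot all_order all_algebra.
From mathcomp Require Import reals.
From mathcomp Require Import ring lra zify.
Import Order.TTheory GRing.Theory Num.Theory.
Local Open Scope ring_scope.

Section RealPart.
Variable R : realType.
Variables m n : nat.
Local Notation y := ((Ybig m n R)%:R / n%:R : R).

Lemma y_ge0 : 0 <= y.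
Proof. by rewrite divr_ge0 ?ler0n. Qed.

Lemma fpot_le_sq (x : R) : fpot m n R x <= x ^+ 2.
Proof.
have := y_ge0; rewrite /fpot; case: ifP => // h1; case: ifP => h2 hy.
  by rewrite sqr_ge0.
move/negbT: h1; rewrite -ltNge => h1; move/negbT: h2; rewrite -leNgt => h2.
nra.
Qed.

Lemma fpot_le_sqy (x : R) : fpot m n R x <= (x - y) ^+ 2.
Proof.
have := y_ge0; rewrite /fpot; case: ifP => h1 hy.
  nra.
by case: ifP => // _; rewrite sqr_ge0.
Qed.

Lemma key_ineq {x p : R} : (0 < n)%N -> 0 <= p <= 1 ->
  (x <= 0 -> 1 / n%:R <= p) -> (y <= x -> p <= 1 / n%:R) ->
  p * fpot m n R (x + 1 - 1 / n%:R) + (1 - p) * fpot m n R (x - 1 / n%:R)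
  <= fpot m n R x + 3 * p + 3 / n%:R.
Proof.
move=> n0 /andP[p0 p1] hlo hhi.
have hy := y_ge0.
have q0 : 0 < 1 / (n%:R : R) by rewrite divr_gt0 ?ltr0n.
have q1 : 1 / (n%:R : R) <= 1.
  by rewrite ler_pdivrMr ?ltr0n // mul1r ler1n.
have -> : 3 / (n%:R : R) = 3 * (1 / n%:R) by rewrite mulrA mulr1.
move: hlo hhi q0 q1; set q := 1 / (n%:R : R) => hlo hhi q0 q1.
have p1' : 0 <= 1 - p by lra.
case: (lerP x 0) => hx.
  have -> : fpot m n R x = x ^+ 2 by rewrite /fpot hx.
  have := hlo hx => hpq.
  have := fpot_le_sq (x + 1 - q); have := fpot_le_sq (x - q) => f2 f1.
  have e1 := ler_wpM2l p0 f1; have e2 := ler_wpM2l p1' f2.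
  nra.
case: (ltrP x y) => hxy.
  have -> : fpot m n R x = 0 by rewrite /fpot leNgt hx /= hxy.
  have f1 : fpot m n R (x + 1 - q) <= 1.
    rewrite /fpot; case: ifP => h1; first lra.
    case: ifP => h2 //; move/negbT: h2; rewrite -leNgt => h2; nra.
  have f2 : fpot m n R (x - q) <= q ^+ 2.
    rewrite /fpot; case: ifP => h1; first nra.
    case: ifP => h2; first by rewrite sqr_ge0.
    move/negbT: h2; rewrite -leNgt => h2; lra.
  have e1 := ler_wpM2l p0 f1; have e2 := ler_wpM2l p1' f2.
  nra.
have -> : fpot m n R x = (x - y) ^+ 2 by rewrite /fpot leNgt hx /= ltNge hxy.
have hpq := hhi hxy.
have := fpot_le_sqy (x + 1 - q); have := fpot_le_sqy (x - q) => f2 f1.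
have e1 := ler_wpM2l p0 f1; have e2 := ler_wpM2l p1' f2.
nra.
Qed.
End RealPart.

Lemma iota_last {t} : (0 < t)%N -> iota 1 t = iota 1 t.-1 ++ [:: t].
Proof. by case: t => // t _; have := iotaD 1 t 1; rewrite addn1 add1n. Qed.

Lemma acnt_S n (g : nat -> 'I_n) k t : (0 < t)%N ->
  acnt g k t.+1 = (acnt g k t + (g t == k))%N.
Proof. by move=> t0; rewrite /acnt /= (iota_last t0 : iota 1 t = _) count_cat /= addn0. Qed.

Lemma ccnt_S n (g : nat -> 'I_n) z k t : (0 < t)%N ->
  ccnt g z k t.+1 = (ccnt g z k t + ((g t == k) && z t))%N.
Proof. by move=> t0; rewrite /ccnt /= (iota_last t0 : iota 1 t = _) count_cat /= addn0. Qed.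

Lemma pre_eq {A} {v v' : nat -> A} {t} : pre v t = pre v' t ->
  forall i, (1 <= i <= t)%N -> v i = v' i.
Proof.
move=> /eq_in_map h i hi; apply: h.
by rewrite mem_iota; lia.
Qed.

Lemma acnt_eq n (g g' : nat -> 'I_n) k t :
  (forall i, (1 <= i < t)%N -> g i = g' i) -> acnt g k t = acnt g' k t.
Proof.
move=> h; rewrite /acnt; apply: eq_in_count => i; rewrite mem_iota => hi.
by rewrite h //; lia.
Qed.

Lemma ccnt_eq n (g g' : nat -> 'I_n) z z' k t :
  (forall i, (1 <= i < t)%N -> g i = g' i) ->
  (forall i, (1 <= i < t)%N -> z i = z' i) -> ccnt g z k t = ccnt g' z' k t.
Proof.
move=> h h'; rewrite /ccnt; apply: eq_in_count => i; rewrite mem_iota => hi.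
by rewrite h ?h' //; lia.
Qed.

Theorem lemma2p2 (R : realType) (m n : nat)
  (Omega : finType) (P : Omega -> R)
  (T : finType) (U : Omega -> T)                      (* the Guesser's private randomness *)
  (strat : nat -> seq bool -> T -> 'I_n)             (* the (randomized) strategy *)
  (deck : Omega -> nat -> 'I_n)                       (* the shuffled deck *)
  (g : Omega -> nat -> 'I_n)                          (* the guesses *)
  (z : Omega -> nat -> bool) :                        (* the coupled vector z *)
  (0 < m)%N -> (0 < n)%N ->
  1200 * Num.sqrt (m%:R : R) <= n%:R ->
  is_prob R Omega P ->
  (* the deck is uniformly distributed over arrangements with m copies of each label *)
  (forall w, 0 < P w -> valid_deck m n (deck w)) ->
  (forall d d', valid_deck m n d -> valid_deck m n d' ->
     Pr R Omega P (fun w => agree m n (deck w) d) = Pr R Omega P (fun w => agree m n (deck w) d')) ->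
  (* the Guesser's randomness is independent of the deck *)
  (forall (u : T) (d : nat -> 'I_n),
     Pr R Omega P (fun w => (U w == u) && agree m n (deck w) d)
     = Pr R Omega P (fun w => U w == u) * Pr R Omega P (fun w => agree m n (deck w) d)) ->
  (* g_t is a (randomized) function of y_1, ..., y_{t-1} *)
  (forall w t, 0 < P w -> (1 <= t <= m * n)%N ->
     g w t = strat t (pre (yv (deck w) (g w)) t.-1) (U w)) ->
  (* (a) *)
  (forall w, 0 < P w -> forall (k : 'I_n) t, (1 <= t <= (m * n).+1)%N ->
     (m <= ccnt (g w) (z w) k t + (m * n - acnt (g w) k t - Ybig m n R))%N
     && (ccnt (g w) (z w) k t <= m)%N) ->
  (* (b) *)
  (forall t, (1 <= t <= m * n)%N ->
   forall (w0 w1 : Omega) (zeta : nat -> bool), 0 < P w0 ->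
     let A := fun w => (pre (g w) t == pre (g w0) t)
                       && (pre (yv (deck w) (g w)) t == pre (yv (deck w0) (g w0)) t) in
     let B := fun w => (pre (g w) (m * n) == pre (g w1) (m * n))
                       && (pre (yv (deck w) (g w)) (m * n)
                           == pre (yv (deck w1) (g w1)) (m * n)) in
     Pr R Omega P (fun w => [&& A w, B w & pre (z w) t == pre zeta t]) / Pr R Omega P A
     = (Pr R Omega P (fun w => A w && B w) / Pr R Omega P A) *
       \prod_(1 <= i < t.+1) (Pr R Omega P (fun w => A w && (z w i == zeta i)) / Pr R Omega P A)) ->
  (* (c) *)
  (forall t, (1 <= t <= m * n)%N -> forall w, 0 < P w ->
     (acnt (g w) (g w t) t + Ybig m n R < m * n)%N ->
     condexp R Omega P _ (fun w' => ((z w' t : nat)%:R : R))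
             (fun w' => (pre (g w') t, pre (z w') t.-1)) w
     = ((m%:R - (ccnt (g w) (z w) (g w t) t)%:R) /
        ((m * n)%:R - (acnt (g w) (g w t) t)%:R - (Ybig m n R)%:R))) ->
  (* (d) *)
  (forall t, (1 <= t <= m * n)%N -> forall w, 0 < P w ->
     condexp R Omega P _ (fun w' => ((yv (deck w') (g w') t : nat)%:R : R))
             (fun w' => (pre (g w') t, pre (yv (deck w') (g w')) t.-1)) w
     <= condexp R Omega P _ (fun w' => ((z w' t : nat)%:R : R))
             (fun w' => (pre (g w') t, pre (z w') t.-1)) w ->
     (yv (deck w) (g w) t <= z w t)%N) ->
  (* conclusion: E(X_{k,t+1} | g_{<=t}, z_{<=t-1}) <= X_{k,t} almost surely *)
  forall (k : 'I_n) (t : nat), (1 <= t <= m * n)%N ->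
  forall w, 0 < P w ->
    condexp R Omega P _ (fun w' => Xkt m n R (g w') (z w') k t.+1)
            (fun w' => (pre (g w') t, pre (z w') t.-1)) w
    <= Xkt m n R (g w) (z w) k t.
Proof.
move=> m0 n0 _ [P0 P1] _ _ _ _ Ha _ Hc _ k t /andP[t1 tmn] w Pw.
set key := (fun w' => (pre (g w') t, pre (z w') t.-1)).
have agr : forall w', key w' == key w ->
    (forall i, (1 <= i <= t)%N -> g w' i = g w i) /\
    (forall i, (1 <= i < t)%N -> z w' i = z w i).
  move=> w' /eqP [hg hz]; split; first exact: pre_eq hg.
  by move=> i hi; apply: (pre_eq hz); lia.
set c0 := ccnt (g w) (z w) k t.
set a0 := acnt (g w) k t.
pose h (b : bool) : R :=
  fpot m n R ((c0 + ((g w t == k) && b))%:R - (a0 + (g w t == k))%:R / n%:R)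
  - 3 * (c0 + ((g w t == k) && b))%:R - 3 * (a0 + (g w t == k))%:R / n%:R.
have hX : forall w', key w' == key w ->
    Xkt m n R (g w') (z w') k t.+1 = h (z w' t).
  move=> w' /agr [hg hz].
  have e1 : ccnt (g w') (z w') k t = c0.
    by apply: ccnt_eq => i hi; [apply: hg | apply: hz]; lia.
  have e2 : acnt (g w') k t = a0 by apply: acnt_eq => i hi; apply: hg; lia.
  have e3 : g w' t = g w t by apply: hg; lia.
  by rewrite /Xkt ccnt_S // acnt_S // e1 e2 e3.
have hlin : forall b : bool, h b = h false + (h true - h false) * (b : nat)%:R.
  by case; rewrite /= ?mulr1 ?mulr0 ?addr0 // addrC subrK.
have hD : 0 < \sum_(w' | key w' == key w) P w'.
  rewrite (bigD1 w) //=; apply: (lt_le_trans Pw); rewrite lerDl.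
  by apply: sumr_ge0 => *; exact: P0.
set D := \sum_(w' | key w' == key w) P w' in hD.
set p := condexp R Omega P _ (fun w' => ((z w' t : nat)%:R : R)) key w.
have hcond : condexp R Omega P _ (fun w' => Xkt m n R (g w') (z w') k t.+1) key w
    = h false + (h true - h false) * p.
  rewrite /p /condexp -/D.
  rewrite (eq_bigr (fun w' => P w' * h false + (h true - h false) * (P w' * (z w' t : nat)%:R))); last first.
    by move=> w' hw'; rewrite hX // hlin; ring.
  rewrite big_split /= -mulr_suml -mulr_sumr -/D.
  by field; exact: lt0r_neq0 hD.
rewrite hcond.
have hp : 0 <= p <= 1.
  rewrite /p /condexp -/D; apply/andP; split.
    by apply: divr_ge0; [apply: sumr_ge0 => w' _; apply: mulr_ge0 => //; apply: ler0n | exact: ltW].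
  rewrite ler_pdivrMr // mul1r; apply: ler_sum => w' _.
  by case: (z w' t); rewrite ?mulr1 ?mulr0.
have nr0 : 0 < (n%:R : R) by rewrite ltr0n.
have hy := y_ge0 R m n.
case gk: (g w t == k); last first.
  have -> : h true = h false by rewrite /h gk.
  by rewrite subrr mul0r addr0 /h gk /= !addn0 /Xkt.
set x : R := c0%:R - a0%:R / n%:R.
have a1 : (c0 + 1)%:R - (a0 + 1)%:R / n%:R = x + 1 - 1 / n%:R :> R.
  by rewrite /x !natrD; field; exact: lt0r_neq0.
have a2 : c0%:R - (a0 + 1)%:R / n%:R = x - 1 / n%:R :> R.
  by rewrite /x !natrD; field; exact: lt0r_neq0.
have eh1 : h true = fpot m n R (x + 1 - 1 / n%:R) - 3 * c0%:R - 3 - 3 * (a0%:R + 1) / n%:R.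
  rewrite /h gk /= a1 !natrD; ring.
have eh0 : h false = fpot m n R (x - 1 / n%:R) - 3 * c0%:R - 3 * (a0%:R + 1) / n%:R.
  rewrite /h gk /= addn0 a2 !natrD; ring.
have eX : Xkt m n R (g w) (z w) k t = fpot m n R x - 3 * c0%:R - 3 * a0%:R / n%:R by [].
have [hlo hhi] : (x <= 0 -> 1 / n%:R <= p) /\ ((Ybig m n R)%:R / n%:R <= x -> p <= 1 / n%:R).
  have hx : x = c0%:R - a0%:R / n%:R by [].
  case hY: (a0 + Ybig m n R < m * n)%N.
    have hcp := Hc t (ltac:(by rewrite t1 tmn)) w Pw (ltac:(by rewrite (eqP gk) hY)).
    rewrite (eqP gk) -/c0 -/a0 in hcp.
    have hpv : p = _ := hcp.
    have hN : 0 < (m * n)%:R - a0%:R - (Ybig m n R)%:R :> R.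
      have : ((a0 + Ybig m n R)%:R < (m * n)%:R :> R) by rewrite ltr_nat.
      rewrite natrD; lra.
    have iden : 1 / n%:R * ((m * n)%:R - a0%:R - (Ybig m n R)%:R)
        = m%:R - a0%:R / n%:R - (Ybig m n R)%:R / n%:R :> R.
      by rewrite natrM; field; exact: lt0r_neq0.
    split => hh; rewrite hpv.
      by rewrite ler_pdivlMr // iden; lra.
    by rewrite ler_pdivrMr // iden; lra.
  move/negbT: hY; rewrite -leqNgt => hY.
  have := Ha w Pw k t (ltac:(rewrite t1 /=; lia)); rewrite -/c0 -/a0 => /andP[h1 h2].
  have hc0 : c0 = m by lia.
  have ha0 : (a0 < m * n)%N.
    have := count_size (fun i => g w i == k) (iota 1 t.-1).
    rewrite size_iota /a0 /acnt; lia.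
  have hp0 : p = 0.
    rewrite /p /condexp big1 ?mul0r // => w' hw'.
    case: (P w' =P 0) => [->|hP]; first by rewrite mul0r.
    have Pw' : 0 < P w' by rewrite lt_def (P0 w') andbT; apply/eqP.
    have := Ha w' Pw' k t.+1 (ltac:(lia)); move=> /andP[_ hc'].
    move: (agr w' hw') => [hg hz].
    have e1 : ccnt (g w') (z w') k t = c0.
      by apply: ccnt_eq => i hi; [apply: hg | apply: hz]; lia.
    have e3 : g w' t = g w t by apply: hg; lia.
    rewrite ccnt_S // e1 e3 gk /= hc0 in hc'.
    by case: (z w' t) hc'; rewrite ?mulr0 // addn1 ltnn.
  have hxpos : 0 < x.
    have : a0%:R / n%:R < (m%:R : R) by rewrite ltr_pdivrMr // -natrM ltr_nat.
    rewrite hx hc0; lra.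
  rewrite hp0; split => hh; first lra.
  by rewrite divr_ge0 // ltW.
have hk := key_ineq R m n n0 hp hlo hhi.
rewrite eh1 eh0 eX.
have -> : 3 * (a0%:R + 1) / n%:R = 3 * a0%:R / n%:R + 3 / n%:R :> R.
  by rewrite mulrDr mulr1 mulrDl.
move: hk; set F0 := fpot m n R (x - 1 / n%:R); set F1 := fpot m n R (x + 1 - 1 / n%:R).
set F := fpot m n R x => hk.
lra.
Qed.
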